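(* Let $\zeta\in\Omega_n$ have rank $2$. For $J\in\mathbb N_0$ let $\Pi_J$ be the orthogonal projection onto the eigenspace of $\mathcal A$ with eigenvalue $J$. Then $\|\Pi_J|\zeta\rangle\|^2=\det(\mathbb 1-\zeta^*\zeta)\big(\tfrac12\operatorname{tr}(\zeta^*\zeta)\big)^J(J+1)$.
   Context: Let $A_a,B_a$ ($a=1,\dots,n$) be $2n$ independent bosonic annihilation operators on the Fock space with vacuum $|0\rangle$: $[A_a,A_b^\dagger]=[B_a,B_b^\dagger]=\delta_{ab}$, all other commutators vanishing, $A_a|0\rangle=B_a|0\rangle=0$. Define $E_{ab}=A_a^\dagger A_b+B_a^\dagger B_b+\delta_{ab}$, $\widetilde F_{ab}=B_a^\dagger A_b^\dagger-A_a^\dagger B_b^\dagger$, $\widetilde F_z=\sum_{a,b}z_{ab}\widetilde F_{ab}$, and the total area operator $\mathcal A=\sum_a\tfrac12(E_{aa}-1)$. Let $\Omega_n=\{\zeta\in M_n(\mathbb C):\zeta^{\mathsf T}=-\zeta,\ \zeta^*\zeta<\mathbb 1\}$ and $|\zeta\rangle=\det(\mathbb 1-\zeta^*\zeta)^{1/2}\exp(\tfrac12\widetilde F_\zeta)|0\rangle$. *)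

(* Defs.v *)
(* Bosonic Fock space over 2n modes (A_1..A_n, B_1..B_n),
   realised concretely in the orthonormal occupation-number basis |m>. *)
From HB Require Import structures.
From mathcomp Require Import all_boot all_order all_algebra.
From Stdlib Require Import ClassicalEpsilon.
Set Implicit Arguments. Unset Strict Implicit. Unset Printing Implicit Defensive.
Import Order.TTheory GRing.Theory Num.Theory.
Local Open Scope ring_scope.

Section Fock.
Variables (C : numClosedFieldType) (n : nat).

(* occupation numbers: (A-occupations, B-occupations) *)
Definition occ := ({ffun 'I_n -> nat} * {ffun 'I_n -> nat})%type.

(* a (possibly infinite) vector = its family of coefficients in the
   orthonormal occupation basis *)
Definition state := occ -> C.

Definition bump (f : {ffun 'I_n -> nat}) (a : 'I_n) : {ffun 'I_n -> nat} :=
  [ffun i => (f i + (i == a))%N].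
Definition unbump (f : {ffun 'I_n -> nat}) (a : 'I_n) : {ffun 'I_n -> nat} :=
  [ffun i => (f i - (i == a))%N].

Definition vac : state := fun m => (m == ([ffun _ => 0%N], [ffun _ => 0%N]))%:R.

Definition ket_basis (m : occ) : state := fun m' => (m' == m)%:R.

(* A_a^dagger |m> = sqrt(m_a + 1) |m + e_a>,  A_a |m> = sqrt(m_a) |m - e_a> *)
Definition Adag (a : 'I_n) (f : state) : state := fun m =>
  if (0 < m.1 a)%N then sqrtC (m.1 a)%:R * f (unbump m.1 a, m.2) else 0.
Definition Aop (a : 'I_n) (f : state) : state := fun m =>
  sqrtC (m.1 a).+1%:R * f (bump m.1 a, m.2).
Definition Bdag (a : 'I_n) (f : state) : state := fun m =>
  if (0 < m.2 a)%N then sqrtC (m.2 a)%:R * f (m.1, unbump m.2 a) else 0.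
Definition Bop (a : 'I_n) (f : state) : state := fun m =>
  sqrtC (m.2 a).+1%:R * f (m.1, bump m.2 a).

Definition Eop (a b : 'I_n) (f : state) : state := fun m =>
  Adag a (Aop b f) m + Bdag a (Bop b f) m + (a == b)%:R * f m.

Definition Ftil (a b : 'I_n) (f : state) : state := fun m =>
  Bdag a (Adag b f) m - Adag a (Bdag b f) m.
Definition Ftilz (z : 'M[C]_n) (f : state) : state := fun m =>
  \sum_(a < n) \sum_(b < n) z a b * Ftil a b f m.

Definition areaOp (f : state) : state := fun m =>
  \sum_(a < n) 2%:R^-1 * (Eop a a f m - f m).

(* orthogonal projection onto the eigenspace of areaOp with eigenvalue J:
   keeps exactly the components along basis vectors lying in that eigenspace *)
Definition PiJ (J : nat) (f : state) : state := fun m =>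
  if excluded_middle_informative
       (areaOp (ket_basis m) = (fun m' => J%:R * ket_basis m m'))
  then f m else 0.

Definition norm2_box (f : state) (N : nat) : C :=
  \sum_(p : {ffun 'I_n -> 'I_N} * {ffun 'I_n -> 'I_N})
     `|f ([ffun i => val (p.1 i)], [ffun i => val (p.2 i)])| ^+ 2.

(* coherent-state ket |zeta>: psi is the coefficientwise limit of the
   partial sums  det(1 - zeta^* zeta)^{1/2} sum_{k<K} (1/k!) (1/2 F~_zeta)^k |0> *)
Definition adjmx (p q : nat) (z : 'M[C]_(p, q)) : 'M[C]_(q, p) :=
  (map_mx Num.conj z)^T.

Definition exp_partial (z : 'M[C]_n) (K : nat) : state := fun m =>
  sqrtC (\det (1%:M - adjmx z *m z)) *
  \sum_(k < K) (k`!)%:R^-1 * iter k (fun g => fun m' => 2%:R^-1 * Ftilz z g m') vac m.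

Definition is_ket_zeta (z : 'M[C]_n) (psi : state) : Prop :=
  forall m, exists K, forall K', (K <= K')%N -> psi m = exp_partial z K' m.

Definition in_Omega (z : 'M[C]_n) : Prop :=
  z^T = - z /\
  forall v : 'cV[C]_n, v != 0 ->
    0 < ((adjmx v) *m (1%:M - adjmx z *m z) *m v) ord0 ord0.

End Fock.

(* Main.v *)
Require Import Defs.
From mathcomp Require Import all_boot all_order all_algebra.
From mathcomp Require Import ring.
From Stdlib Require Import FunctionalExtensionality ClassicalEpsilon.
Import Order.TTheory GRing.Theory Num.Theory.
Local Open Scope ring_scope.
Set Warnings "-notation-overridden,-ambiguous-paths".
Set Implicit Arguments. Unset Strict Implicit. Unset Printing Implicit Defensive.

Lemma sum_delta (C : numClosedFieldType) n (F : 'I_n -> C) i :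
  \sum_(l < n) (l == i)%:R * F l = F i.
Proof.
rewrite (bigD1 i) //= eqxx mul1r big1 ?addr0 // => l /negbTE ->; by rewrite mul0r.
Qed.

Lemma sum_delta_r (C : numClosedFieldType) n (F : 'I_n -> C) i a :
  \sum_(l < n) F l * ((l == i)%:R * a) = F i * a.
Proof.
rewrite (bigD1 i) //= eqxx mul1r big1 ?addr0 // => l /negbTE ->; by rewrite mul0r mulr0.
Qed.



Lemma sum_ord2 (C : numClosedFieldType) (F : 'I_2 -> C) :
  \sum_(r < 2) F r = F ord0 + F (lift ord0 ord0).
Proof. by rewrite !big_ord_recl big_ord0 addr0. Qed.

Lemma rank2_decomp (C : numClosedFieldType) n (z : 'M[C]_n) :
  z^T = - z -> \rank z = 2%N ->
  exists x y : 'I_n -> C, forall k l, z k l = x k * y l - y k * x l.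
Proof.
move=> zT rz.
have zA : forall k l, z l k = - z k l.
  by move=> k l; move/matrixP: zT => /(_ k l); rewrite !mxE.
have z0 : forall k, z k k = 0.
  move=> k; have : z k k *+ 2 = 0 by rewrite mulr2n {1}zA addNr.
  by move/eqP; rewrite mulrn_eq0 /= => /eqP.
case: (pickP (fun p : 'I_n * 'I_n => z p.1 p.2 != 0)) => [[i j] /= nz | all0]; last first.
  have : z = 0 by apply/matrixP => k l; have := all0 (k, l); rewrite /= mxE => /negbFE/eqP.
  by move=> zz; move: rz; rewrite zz mxrank0.
set c := z i j.
pose R := \matrix_(r < 2, k < n) (if (r : nat) == 0%N then z i k else z j k).
pose Dsel := \matrix_(r < 2, l < n) (if (r : nat) == 0%N then (l == i)%:R else (l == j)%:R : C).
have RD : R = Dsel *m z.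
  apply/matrixP => r k; rewrite !mxE.
  under eq_bigr do rewrite mxE.
  by case: ((r : nat) == 0%N); rewrite sum_delta.
pose W := \matrix_(k < n, s < 2) (if (s : nat) == 0%N then (k == j)%:R * c^-1 else (k == i)%:R * (- c^-1)).
have RW : R *m W = 1%:M.
  apply/matrixP => r s; rewrite !mxE.
  under eq_bigr do rewrite !mxE.
  case: r => [[|[|//]] Hr]; case: s => [[|[|//]] Hs] /=;
    rewrite sum_delta_r ?z0 ?mulr0 ?mul0r //.
  - by rewrite mulfV.
  - by rewrite zA mulrNN mulfV.
have rR : \rank R = 2%N.
  apply/anti_leq; rewrite rank_leq_row /=.
  by rewrite -{1}(mxrank1 C 2) -RW mxrankM_maxl.
have sRz : (R <= z)%MS by apply/submxP; exists Dsel.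
have szR : (z <= R)%MS by rewrite -(mxrank_leqif_sup sRz).2 rR rz.
exists (fun l => z l j / c), (fun k => z i k) => l k.
have : (row l z <= R)%MS by apply: submx_trans szR; apply: row_sub.
case/submxP => D HD.
have E : forall k, z l k = D 0 0 * z i k + D 0 (lift ord0 ord0) * z j k.
  move=> k'; move/matrixP: HD => /(_ 0 k'); rewrite !mxE => ->.
  rewrite sum_ord2 !mxE /=. done.
have Ei := E i; have Ej := E j.
rewrite z0 mulr0 addr0 in Ej. rewrite (zA i j) z0 mulr0 add0r in Ei.
rewrite E (zA l i) (zA k j) Ei.
have -> : D 0 0 = z l j / c by rewrite Ej mulfK.
rewrite /c; field.
by [].
Qed.
Lemma sep (C : numClosedFieldType) n (f g : 'I_n -> C) :
  \sum_(a < n) \sum_(b < n) f a * g b = (\sum_(a < n) f a) * (\sum_(b < n) g b).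
Proof. rewrite mulr_suml; apply eq_bigr => a _; by rewrite mulr_sumr. Qed.

Lemma sep2 (C : numClosedFieldType) n (f1 g1 f2 g2 : 'I_n -> C) :
  \sum_(a < n) \sum_(b < n) (f1 a * g1 b - f2 a * g2 b) =
  (\sum_(a < n) f1 a) * (\sum_(b < n) g1 b) - (\sum_(a < n) f2 a) * (\sum_(b < n) g2 b).
Proof. under eq_bigr do rewrite sumrB; by rewrite sumrB !sep. Qed.

Lemma lin2 (C : numClosedFieldType) n (f g : 'I_n -> C) u v :
  \sum_(a < n) (f a * u - g a * v) = (\sum_(a < n) f a) * u - (\sum_(a < n) g a) * v.
Proof. by rewrite sumrB -!mulr_suml. Qed.


Lemma tr_adj (C : numClosedFieldType) n (z : 'M[C]_n) :
  \tr (adjmx z *m z) = \sum_(a < n) \sum_(b < n) (z a b)^* * z a b.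
Proof.
rewrite /mxtrace exchange_big; apply eq_bigr => a _; rewrite !mxE.
by apply eq_bigr => b _; rewrite !mxE.
Qed.

Lemma tr_decomp (C : numClosedFieldType) n (z : 'M[C]_n) (x y : 'I_n -> C) :
  (forall k l, z k l = x k * y l - y k * x l) ->
  \sum_(a < n) \sum_(b < n) (z a b)^* * z a b =
  2%:R * ((\sum_a (x a)^* * x a) * (\sum_a (y a)^* * y a)
          - (\sum_a (x a)^* * y a) * (\sum_a (y a)^* * x a)).
Proof.
move=> zE.
transitivity (\sum_(a < n) \sum_(b < n)
  (((x a)^* * x a * ((y b)^* * y b) - (x a)^* * y a * ((y b)^* * x b)) +
   ((y a)^* * y a * ((x b)^* * x b) - (y a)^* * x a * ((x b)^* * y b)))).
  apply eq_bigr => a _; apply eq_bigr => b _; rewrite zE !rmorphB !rmorphM /=; ring.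
under eq_bigr do rewrite big_split /=.
rewrite big_split /= !sep2; ring.
Qed.

Lemma K_decomp (C : numClosedFieldType) n (z : 'M[C]_n) (x y : 'I_n -> C) :
  (forall k l, z k l = x k * y l - y k * x l) -> forall e dd,
  \sum_(a < n) \sum_(b < n) (z a b)^* * z a dd * z e b =
  ((\sum_a (x a)^* * x a) * (\sum_a (y a)^* * y a)
          - (\sum_a (x a)^* * y a) * (\sum_a (y a)^* * x a)) * z e dd.
Proof.
move=> zE e dd.
transitivity (\sum_(a < n) \sum_(b < n)
  (((x a)^* * x a * y dd - (x a)^* * y a * x dd) * ((y b)^* * y b * x e - (y b)^* * x b * y e)
  - ((y a)^* * x a * y dd - (y a)^* * y a * x dd) * ((x b)^* * y b * x e - (x b)^* * x b * y e))).
  apply eq_bigr => a _; apply eq_bigr => b _; rewrite !zE !rmorphB !rmorphM /=; ring.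
rewrite sep2 !lin2 zE; ring.
Qed.






Lemma sylvester (R : comPzRingType) n m (A : 'M[R]_(n, m)) (B : 'M[R]_(m, n)) :
  \det (1%:M - A *m B) = \det (1%:M - B *m A).
Proof.
have E1 : block_mx 1%:M A B 1%:M = block_mx 1%:M 0 B 1%:M *m block_mx 1%:M A 0 (1%:M - B *m A).
  by rewrite mulmx_block !mul1mx !mulmx0 !mul0mx ?addr0 ?add0r ?mulmx1 addrC subrK.
have E2 : block_mx 1%:M A B 1%:M = block_mx (1%:M - A *m B) A 0 1%:M *m block_mx 1%:M 0 B 1%:M.
  by rewrite mulmx_block !mul1mx !mulmx0 !mul0mx ?addr0 ?add0r ?mulmx1 subrK.
have := congr1 determinant E1; rewrite E2 !det_mulmx (det_lblock (1%:M : 'M_n)) det_ublock.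
by rewrite ?det_ublock !det1 !mul1r ?mulr1.
Qed.

Lemma det_decomp (C : numClosedFieldType) n (z : 'M[C]_n) (x y : 'I_n -> C) :
  (forall k l, z k l = x k * y l - y k * x l) ->
  \det (1%:M - adjmx z *m z) =
  (1 - ((\sum_a (x a)^* * x a) * (\sum_a (y a)^* * y a)
          - (\sum_a (x a)^* * y a) * (\sum_a (y a)^* * x a))) ^+ 2.
Proof.
move=> zE.
set d := (X in (1 - X) ^+ 2).
pose U := \matrix_(k < n, s < 2) (if (s : nat) == 0%N then x k else y k).
pose V := \matrix_(s < 2, l < n) (if (s : nat) == 0%N then y l else - x l).
have zUV : z = U *m V.
  apply/matrixP => k l; rewrite !mxE sum_ord2 !mxE /= zE; ring.
rewrite zUV mulmxA sylvester -zUV.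
have -> : 1%:M - V *m (adjmx z *m U) = (1 - d)%:M.
  apply/matrixP => r s; rewrite !mxE.
  under eq_bigr do rewrite !mxE.
  under eq_bigr do under eq_bigr do rewrite !mxE.
  under eq_bigr do rewrite mulr_sumr.
  case: r => [[|[|//]] Hr]; case: s => [[|[|//]] Hs] /=; rewrite ?mulr1n ?mulr0n.
  - rewrite (eq_bigr (fun i => \sum_(i0 < n) ((y i)^* * y i * ((x i0)^* * x i0) - (x i)^* * y i * ((y i0)^* * x i0)))).
      by rewrite sep2 /d; ring.
    by move=> i _; apply eq_bigr => i0 _; rewrite zE rmorphB !rmorphM /=; ring.
  - rewrite (eq_bigr (fun i => \sum_(i0 < n) ((y i)^* * y i * ((x i0)^* * y i0) - (x i)^* * y i * ((y i0)^* * y i0)))).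
      by rewrite sep2; ring.
    by move=> i _; apply eq_bigr => i0 _; rewrite zE rmorphB !rmorphM /=; ring.
  - rewrite (eq_bigr (fun i => \sum_(i0 < n) ((x i)^* * x i * ((y i0)^* * x i0) - (y i)^* * x i * ((x i0)^* * x i0)))).
      by rewrite sep2; ring.
    by move=> i _; apply eq_bigr => i0 _; rewrite zE rmorphB !rmorphM /=; ring.
  - rewrite (eq_bigr (fun i => \sum_(i0 < n) ((x i)^* * x i * ((y i0)^* * y i0) - (y i)^* * x i * ((x i0)^* * y i0)))).
      by rewrite sep2 /d; ring.
    by move=> i _; apply eq_bigr => i0 _; rewrite zE rmorphB !rmorphM /=; ring.
by rewrite det_scalar.
Qed.
Lemma bumpE n (f : {ffun 'I_n -> nat}) a i : Defs.bump f a i = (f i + (i == a))%N.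
Proof. by rewrite ffunE. Qed.
Lemma unbumpE n (f : {ffun 'I_n -> nat}) a i : Defs.unbump f a i = (f i - (i == a))%N.
Proof. by rewrite ffunE. Qed.

Lemma unbumpK n (f : {ffun 'I_n -> nat}) a : Defs.unbump (Defs.bump f a) a = f.
Proof. by apply/ffunP => i; rewrite unbumpE bumpE addnK. Qed.
Lemma bumpK n (f : {ffun 'I_n -> nat}) a : (0 < f a)%N -> Defs.bump (Defs.unbump f a) a = f.
Proof.
move=> H; apply/ffunP => i; rewrite bumpE unbumpE.
by case: eqP => [->|_]; rewrite ?subn0 ?addn0 // subnK.
Qed.
Lemma bump_ne n (f : {ffun 'I_n -> nat}) a b : a != b -> Defs.bump f a b = f b.
Proof. by rewrite bumpE eq_sym => /negbTE ->; rewrite addn0. Qed.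
Lemma unbump_ne n (f : {ffun 'I_n -> nat}) a b : a != b -> Defs.unbump f a b = f b.
Proof. by rewrite unbumpE eq_sym => /negbTE ->; rewrite subn0. Qed.
Lemma bump_unbump n (f : {ffun 'I_n -> nat}) a b : a != b ->
  Defs.bump (Defs.unbump f b) a = Defs.unbump (Defs.bump f a) b.
Proof.
move=> ab; apply/ffunP => i; rewrite !ffunE.
have [->|ia] := eqVneq i a; first by rewrite (negbTE ab) ?eqxx ?subn0.
by rewrite !addn0.
Qed.
Lemma unbumpC n (f : {ffun 'I_n -> nat}) a b :
  Defs.unbump (Defs.unbump f a) b = Defs.unbump (Defs.unbump f b) a.
Proof. by apply/ffunP => i; rewrite !unbumpE -!subnDA addnC. Qed.

Definition shiftform (C : numClosedFieldType) n (op : state C n -> state C n) :=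
  exists (w : occ n -> C) (s : occ n -> occ n), forall f m, op f m = w m * f (s m).

Lemma AdagS (C : numClosedFieldType) n (a : 'I_n) : shiftform (@Adag C n a).
Proof.
exists (fun m : occ n => if (0 < m.1 a)%N then sqrtC (m.1 a)%:R else 0 : C),
       (fun m : occ n => (Defs.unbump m.1 a, m.2)) => f m.
by rewrite /Adag; case: ifP; rewrite ?mul0r.
Qed.
Lemma BdagS (C : numClosedFieldType) n (a : 'I_n) : shiftform (@Bdag C n a).
Proof.
exists (fun m : occ n => if (0 < m.2 a)%N then sqrtC (m.2 a)%:R else 0 : C),
       (fun m : occ n => (m.1, Defs.unbump m.2 a)) => f m.
by rewrite /Bdag; case: ifP; rewrite ?mul0r.
Qed.
Lemma AopS (C : numClosedFieldType) n (a : 'I_n) : shiftform (@Aop C n a).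
Proof. by exists (fun m : occ n => sqrtC (m.1 a).+1%:R : C), (fun m : occ n => (Defs.bump m.1 a, m.2)). Qed.
Lemma BopS (C : numClosedFieldType) n (a : 'I_n) : shiftform (@Bop C n a).
Proof. by exists (fun m : occ n => sqrtC (m.2 a).+1%:R : C), (fun m : occ n => (m.1, Defs.bump m.2 a)). Qed.

Arguments AdagS {C n}. Arguments BdagS {C n}. Arguments AopS {C n}. Arguments BopS {C n}.

Lemma shift_comp (C : numClosedFieldType) n (op1 op2 : state C n -> state C n) :
  shiftform op1 -> shiftform op2 -> shiftform (fun f => op1 (op2 f)).
Proof.
case=> w1 [s1 H1] [w2 [s2 H2]].
by exists (fun m => w1 m * w2 (s1 m)), (fun m => s2 (s1 m)) => f m; rewrite H1 H2 mulrA.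
Qed.

Lemma shiftD (C : numClosedFieldType) n (op : state C n -> state C n) :
  shiftform op -> forall f g m, op (fun m => f m + g m) m = op f m + op g m.
Proof. by case=> w [s H] f g m; rewrite !H mulrDr. Qed.
Lemma shiftZ (C : numClosedFieldType) n (op : state C n -> state C n) :
  shiftform op -> forall c f m, op (fun m => c * f m) m = c * op f m.
Proof. by case=> w [s H] c f m; rewrite !H mulrCA. Qed.
Lemma shift0 (C : numClosedFieldType) n (op : state C n -> state C n) :
  shiftform op -> forall m, op (fun _ => 0) m = 0.
Proof. by case=> w [s H] m; rewrite !H mulr0. Qed.
Lemma shiftS2 (C : numClosedFieldType) n (op : state C n -> state C n) :
  shiftform op -> forall (c : 'I_n -> 'I_n -> C) F m,
  op (fun m => \sum_(i < n) \sum_(j < n) c i j * F i j m) m =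
  \sum_(i < n) \sum_(j < n) c i j * op (F i j) m.
Proof.
case=> w [s H] c F m; rewrite !H mulr_sumr; apply eq_bigr => i _.
by rewrite mulr_sumr; apply eq_bigr => j _; rewrite H mulrCA.
Qed.
Lemma shiftS3 (C : numClosedFieldType) n (op : state C n -> state C n) :
  shiftform op -> forall (c : 'I_n -> 'I_n -> 'I_n -> C) F m,
  op (fun m => \sum_(i < n) \sum_(j < n) \sum_(k < n) c i j k * F i j k m) m =
  \sum_(i < n) \sum_(j < n) \sum_(k < n) c i j k * op (F i j k) m.
Proof.
case=> w [s H] c F m; rewrite !H mulr_sumr; apply eq_bigr => i _.
rewrite mulr_sumr; apply eq_bigr => j _.
by rewrite mulr_sumr; apply eq_bigr => k _; rewrite H mulrCA.
Qed.

Lemma shiftDs (C : numClosedFieldType) n (op : state C n -> state C n) :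
  shiftform op -> forall f g, op (fun m => f m + g m) = fun m => op f m + op g m.
Proof. move=> H f g; apply: functional_extensionality => m; exact: shiftD. Qed.
Lemma shiftZs (C : numClosedFieldType) n (op : state C n -> state C n) :
  shiftform op -> forall c f, op (fun m => c * f m) = fun m => c * op f m.
Proof. move=> H c f; apply: functional_extensionality => m; exact: shiftZ. Qed.

Lemma sqrt_mul (C : numClosedFieldType) k : sqrtC (k%:R : C) * sqrtC k%:R = k%:R.
Proof. by rewrite -expr2 sqrtCK. Qed.

Lemma c1 (C : numClosedFieldType) n (a b : 'I_n) (f : state C n) m :
  Aop a (Adag b f) m = Adag b (Aop a f) m + (a == b)%:R * f m.
Proof.
move: m => [m1 m2]; rewrite /Aop /Adag /=.
case: (eqVneq a b) => [<-|ab].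
  rewrite bumpE eqxx addn1 /= unbumpK mulrA sqrt_mul.
  have [H0|Hp] := posnP (m1 a).
    by rewrite H0 /= add0r.
  rewrite unbumpE eqxx subn1 bumpK // mulrA prednK // sqrt_mul.
  by rewrite mul1r -natr1 mulrDl mul1r.
rewrite bump_ne // unbump_ne 1?eq_sym // bump_unbump // mul0r addr0.
by case: ifP => _; rewrite ?mulr0 // mulrCA.
Qed.

Lemma c2 (C : numClosedFieldType) n (a b : 'I_n) (f : state C n) m :
  Bop a (Bdag b f) m = Bdag b (Bop a f) m + (a == b)%:R * f m.
Proof.
move: m => [m1 m2]; rewrite /Bop /Bdag /=.
case: (eqVneq a b) => [<-|ab].
  rewrite bumpE eqxx addn1 /= unbumpK mulrA sqrt_mul.
  have [H0|Hp] := posnP (m2 a).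
    by rewrite H0 /= add0r.
  rewrite unbumpE eqxx subn1 bumpK // mulrA prednK // sqrt_mul.
  by rewrite mul1r -natr1 mulrDl mul1r.
rewrite bump_ne // unbump_ne 1?eq_sym // bump_unbump // mul0r addr0.
by case: ifP => _; rewrite ?mulr0 // mulrCA.
Qed.

Lemma c3 (C : numClosedFieldType) n (a b : 'I_n) (f : state C n) m :
  Aop a (Bdag b f) m = Bdag b (Aop a f) m.
Proof. rewrite /Aop /Bdag /=; by case: ifP => _; rewrite ?mulr0 // mulrCA. Qed.
Lemma c4 (C : numClosedFieldType) n (a b : 'I_n) (f : state C n) m :
  Bop a (Adag b f) m = Adag b (Bop a f) m.
Proof. rewrite /Bop /Adag /=; by case: ifP => _; rewrite ?mulr0 // mulrCA. Qed.
Lemma c5 (C : numClosedFieldType) n (a b : 'I_n) (f : state C n) m :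
  Adag a (Bdag b f) m = Bdag b (Adag a f) m.
Proof. rewrite /Bdag /Adag /=; by do 2 case: ifP => _; rewrite ?mulr0 // mulrCA. Qed.
Lemma c6 (C : numClosedFieldType) n (a b : 'I_n) (f : state C n) m :
  Adag a (Adag b f) m = Adag b (Adag a f) m.
Proof.
case: (eqVneq a b) => [<-//|ab].
rewrite /Adag /= unbump_ne // unbump_ne 1?eq_sym // unbumpC.
by do 2 case: ifP => _; rewrite ?mulr0 // mulrCA.
Qed.
Lemma c7 (C : numClosedFieldType) n (a b : 'I_n) (f : state C n) m :
  Bdag a (Bdag b f) m = Bdag b (Bdag a f) m.
Proof.
case: (eqVneq a b) => [<-//|ab].
rewrite /Bdag /= unbump_ne // unbump_ne 1?eq_sym // unbumpC.
by do 2 case: ifP => _; rewrite ?mulr0 // mulrCA.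
Qed.

Lemma c1s (C : numClosedFieldType) n (a b : 'I_n) (f : state C n) :
  Aop a (Adag b f) = fun m => Adag b (Aop a f) m + (a == b)%:R * f m.
Proof. apply: functional_extensionality => m; exact: c1. Qed.
Lemma c2s (C : numClosedFieldType) n (a b : 'I_n) (f : state C n) :
  Bop a (Bdag b f) = fun m => Bdag b (Bop a f) m + (a == b)%:R * f m.
Proof. apply: functional_extensionality => m; exact: c2. Qed.
Lemma c3s (C : numClosedFieldType) n (a b : 'I_n) (f : state C n) :
  Aop a (Bdag b f) = Bdag b (Aop a f).
Proof. apply: functional_extensionality => m; exact: c3. Qed.
Lemma c4s (C : numClosedFieldType) n (a b : 'I_n) (f : state C n) :
  Bop a (Adag b f) = Adag b (Bop a f).
Proof. apply: functional_extensionality => m; exact: c4. Qed.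
Lemma c5s (C : numClosedFieldType) n (a b : 'I_n) (f : state C n) :
  Adag a (Bdag b f) = Bdag b (Adag a f).
Proof. apply: functional_extensionality => m; exact: c5. Qed.
Lemma c6s (C : numClosedFieldType) n (a b : 'I_n) (f : state C n) :
  Adag a (Adag b f) = Adag b (Adag a f).
Proof. apply: functional_extensionality => m; exact: c6. Qed.
Lemma c7s (C : numClosedFieldType) n (a b : 'I_n) (f : state C n) :
  Bdag a (Bdag b f) = Bdag b (Bdag a f).
Proof. apply: functional_extensionality => m; exact: c7. Qed.

Lemma L4A (C : numClosedFieldType) n (a b c d : 'I_n) (g : state C n) m :
  Aop b (Bop a (Bdag c (Adag d g))) m =
  Bdag c (Adag d (Aop b (Bop a g))) m + (d == b)%:R * Bdag c (Bop a g) m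
  + (c == a)%:R * Adag d (Aop b g) m + ((c == a)%:R * (d == b)%:R) * g m.
Proof.
rewrite c2s (shiftD (AopS b)) (shiftZ (AopS b)) c4s c3s c1s.
rewrite (shiftD (BdagS c)) (shiftZ (BdagS c)) c1.
rewrite (eq_sym a c) (eq_sym b d); ring.
Qed.

Lemma L4B (C : numClosedFieldType) n (b d e f : 'I_n) (g : state C n) m :
  Adag d (Aop b (Bdag e (Adag f g))) m =
  Bdag e (Adag f (Adag d (Aop b g))) m + (f == b)%:R * Bdag e (Adag d g) m.
Proof.
rewrite c3s c1s (shiftDs (BdagS e)) (shiftZs (BdagS e)).
rewrite (shiftD (AdagS d)) (shiftZ (AdagS d)) !c5 c6s eq_sym.
by [].
Qed.

Lemma L4C (C : numClosedFieldType) n (a c e f : 'I_n) (g : state C n) m :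
  Bdag c (Bop a (Bdag e (Adag f g))) m =
  Bdag e (Adag f (Bdag c (Bop a g))) m + (e == a)%:R * Bdag c (Adag f g) m.
Proof.
rewrite c2s c4s (shiftD (BdagS c)) (shiftZ (BdagS c)) c7 -c5s eq_sym.
by [].
Qed.

Lemma shiftS2c (C : numClosedFieldType) n (op1 op2 : state C n -> state C n) :
  shiftform op1 -> shiftform op2 -> forall (c : 'I_n -> 'I_n -> C) F m,
  op1 (op2 (fun m => \sum_(i < n) \sum_(j < n) c i j * F i j m)) m =
  \sum_(i < n) \sum_(j < n) c i j * op1 (op2 (F i j)) m.
Proof. move=> H1 H2; exact: (shiftS2 (shift_comp H1 H2)). Qed.
Lemma shiftS3c (C : numClosedFieldType) n (op1 op2 : state C n -> state C n) :
  shiftform op1 -> shiftform op2 -> forall (c : 'I_n -> 'I_n -> 'I_n -> C) F m,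
  op1 (op2 (fun m => \sum_(i < n) \sum_(j < n) \sum_(k < n) c i j k * F i j k m)) m =
  \sum_(i < n) \sum_(j < n) \sum_(k < n) c i j k * op1 (op2 (F i j k)) m.
Proof. move=> H1 H2; exact: (shiftS3 (shift_comp H1 H2)). Qed.

Definition Xop (C : numClosedFieldType) n (z : 'M[C]_n) (f : state C n) : state C n :=
  fun m => \sum_(a < n) \sum_(b < n) z a b * Bdag a (Adag b f) m.
Definition Xd (C : numClosedFieldType) n (z : 'M[C]_n) (f : state C n) : state C n :=
  fun m => \sum_(a < n) \sum_(b < n) (z a b)^* * Aop b (Bop a f) m.
Definition NA (C : numClosedFieldType) n (z : 'M[C]_n) (f : state C n) : state C n :=
  fun m => \sum_(a < n) \sum_(b < n) \sum_(d < n) ((z a b)^* * z a d) * Adag d (Aop b f) m.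
Definition NB (C : numClosedFieldType) n (z : 'M[C]_n) (f : state C n) : state C n :=
  fun m => \sum_(a < n) \sum_(b < n) \sum_(c < n) ((z a b)^* * z c b) * Bdag c (Bop a f) m.



Lemma exch22 (C : numClosedFieldType) n (F : 'I_n -> 'I_n -> 'I_n -> 'I_n -> C) :
  \sum_(a < n) \sum_(b < n) \sum_(c < n) \sum_(d < n) F a b c d =
  \sum_(c < n) \sum_(d < n) \sum_(a < n) \sum_(b < n) F a b c d.
Proof.
rewrite (eq_bigr (fun a => \sum_(c < n) \sum_(b < n) \sum_(d < n) F a b c d)); last first.
  by move=> a _; rewrite exchange_big.
rewrite exchange_big; apply eq_bigr => c _.
rewrite (eq_bigr (fun a => \sum_(d < n) \sum_(b < n) F a b c d)); last first.
  by move=> a _; rewrite exchange_big.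
by rewrite exchange_big.
Qed.

Lemma mul22 (C : numClosedFieldType) n (w v : 'I_n -> 'I_n -> C) (F : 'I_n -> 'I_n -> 'I_n -> 'I_n -> C) :
  \sum_(a < n) \sum_(b < n) w a b * \sum_(c < n) \sum_(d < n) v c d * F a b c d =
  \sum_(a < n) \sum_(b < n) \sum_(c < n) \sum_(d < n) w a b * v c d * F a b c d.
Proof.
apply eq_bigr => a _; apply eq_bigr => b _; rewrite mulr_sumr; apply eq_bigr => c _.
by rewrite mulr_sumr; apply eq_bigr => d _; rewrite mulrA.
Qed.

Lemma swap22 (C : numClosedFieldType) n (w v : 'I_n -> 'I_n -> C) (F : 'I_n -> 'I_n -> 'I_n -> 'I_n -> C) :
  \sum_(a < n) \sum_(b < n) w a b * \sum_(c < n) \sum_(d < n) v c d * F a b c d =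
  \sum_(c < n) \sum_(d < n) v c d * \sum_(a < n) \sum_(b < n) w a b * F a b c d.
Proof.
rewrite mul22 [RHS]mul22 exch22; apply eq_bigr => c _; apply eq_bigr => d _.
by apply eq_bigr => a _; apply eq_bigr => b _; rewrite (mulrC (w a b)).
Qed.

Lemma split4 (C : numClosedFieldType) n (w v : 'I_n -> 'I_n -> C)
   (F1 F2 F3 F4 : 'I_n -> 'I_n -> 'I_n -> 'I_n -> C) :
  \sum_(a < n) \sum_(b < n) w a b * \sum_(c < n) \sum_(d < n) v c d *
     (F1 a b c d + F2 a b c d + F3 a b c d + F4 a b c d) =
  \sum_(a < n) \sum_(b < n) w a b * \sum_(c < n) \sum_(d < n) v c d * F1 a b c d +
  \sum_(a < n) \sum_(b < n) w a b * \sum_(c < n) \sum_(d < n) v c d * F2 a b c d +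
  \sum_(a < n) \sum_(b < n) w a b * \sum_(c < n) \sum_(d < n) v c d * F3 a b c d +
  \sum_(a < n) \sum_(b < n) w a b * \sum_(c < n) \sum_(d < n) v c d * F4 a b c d.
Proof.
rewrite -!big_split /=; apply eq_bigr => a _; rewrite -!big_split /=; apply eq_bigr => b _.
rewrite -!mulrDr; congr (_ * _); rewrite -!big_split /=; apply eq_bigr => c _.
by rewrite -!big_split /=; apply eq_bigr => d _; rewrite !mulrDr.
Qed.

Lemma S2lem (C : numClosedFieldType) n (z : 'M[C]_n) (T : 'I_n -> 'I_n -> C) :
  \sum_(a < n) \sum_(b < n) (z a b)^* * \sum_(c < n) \sum_(d < n) z c d * ((d == b)%:R * T a c) =
  \sum_(a < n) \sum_(b < n) \sum_(c < n) ((z a b)^* * z c b) * T a c.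
Proof.
apply eq_bigr => a _; apply eq_bigr => b _; rewrite mulr_sumr; apply eq_bigr => c _.
by rewrite sum_delta_r mulrA.
Qed.
Lemma S3lem (C : numClosedFieldType) n (z : 'M[C]_n) (T : 'I_n -> 'I_n -> C) :
  \sum_(a < n) \sum_(b < n) (z a b)^* * \sum_(c < n) \sum_(d < n) z c d * ((c == a)%:R * T b d) =
  \sum_(a < n) \sum_(b < n) \sum_(d < n) ((z a b)^* * z a d) * T b d.
Proof.
apply eq_bigr => a _; apply eq_bigr => b _; rewrite exchange_big mulr_sumr; apply eq_bigr => d _.
by rewrite (sum_delta_r (fun c => z c d)) mulrA.
Qed.
Lemma delta2 (C : numClosedFieldType) n (z : 'M[C]_n) a b (X : C) :
  \sum_(c < n) \sum_(d < n) z c d * ((c == a)%:R * (d == b)%:R * X) = z a b * X.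
Proof.
rewrite (bigD1 a) //= [X in _ + X]big1 => [|c /negbTE cn]; last first.
  by apply big1 => d _; rewrite cn !mul0r mulr0.
rewrite addr0; under eq_bigr do rewrite eqxx mul1r.
by rewrite sum_delta_r.
Qed.
Lemma S4lem (C : numClosedFieldType) n (z : 'M[C]_n) (X : C) :
  \sum_(a < n) \sum_(b < n) (z a b)^* * \sum_(c < n) \sum_(d < n) z c d * ((c == a)%:R * (d == b)%:R * X) =
  (\sum_(a < n) \sum_(b < n) (z a b)^* * z a b) * X.
Proof.
rewrite mulr_suml; apply eq_bigr => a _; rewrite mulr_suml; apply eq_bigr => b _.
by rewrite delta2 mulrA.
Qed.

Lemma I1 (C : numClosedFieldType) n (z : 'M[C]_n) (g : state C n) m :
  Xd z (Xop z g) m = Xop z (Xd z g) m + (\sum_(a < n) \sum_(b < n) (z a b)^* * z a b) * g m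
                     + NA z g m + NB z g m.
Proof.
have E : forall a b, Aop b (Bop a (Xop z g)) m =
   \sum_(c < n) \sum_(d < n) z c d * (Bdag c (Adag d (Aop b (Bop a g))) m + (d == b)%:R * Bdag c (Bop a g) m
  + (c == a)%:R * Adag d (Aop b g) m + ((c == a)%:R * (d == b)%:R) * g m).
  move=> a b; rewrite /Xop (shiftS2c (AopS b) (BopS a)).
  by apply eq_bigr => c _; apply eq_bigr => d _; rewrite L4A.
rewrite /Xd.
under eq_bigr do under eq_bigr do rewrite E.
rewrite split4.
rewrite /Xop.
under [in RHS]eq_bigr do under eq_bigr do rewrite (shiftS2c (BdagS _) (AdagS _)).
rewrite -swap22.
rewrite (S2lem z (fun a c => Bdag c (Bop a g) m)) (S3lem z (fun b d => Adag d (Aop b g) m)) S4lem.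
rewrite /NA /NB.
set S1 := (X in X + _ + _ + _ = _).
set R1 := (X in _ = X + _ + _ + _).
have -> : S1 = R1 by [].
rewrite -!addrA; congr (_ + _); ring.
Qed.

Lemma swap32 (C : numClosedFieldType) n (w : 'I_n -> 'I_n -> 'I_n -> C) (v : 'I_n -> 'I_n -> C)
   (F : 'I_n -> 'I_n -> 'I_n -> 'I_n -> 'I_n -> C) :
  \sum_(a < n) \sum_(b < n) \sum_(c < n) w a b c * \sum_(e < n) \sum_(f < n) v e f * F a b c e f =
  \sum_(e < n) \sum_(f < n) v e f * \sum_(a < n) \sum_(b < n) \sum_(c < n) w a b c * F a b c e f.
Proof.
transitivity (\sum_(a < n) \sum_(e < n) \sum_(f < n) \sum_(b < n) \sum_(c < n) w a b c * v e f * F a b c e f).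
  apply eq_bigr => a _; rewrite -exch22; apply eq_bigr => b _; apply eq_bigr => c _.
  rewrite mulr_sumr; apply eq_bigr => e _; rewrite mulr_sumr; apply eq_bigr => f _.
  by rewrite mulrA.
rewrite exchange_big; apply eq_bigr => e _; rewrite exchange_big; apply eq_bigr => f _.
rewrite mulr_sumr; apply eq_bigr => a _; rewrite mulr_sumr; apply eq_bigr => b _.
rewrite mulr_sumr; apply eq_bigr => c _; by rewrite mulrCA mulrA.
Qed.

Lemma split32 (C : numClosedFieldType) n (w : 'I_n -> 'I_n -> 'I_n -> C) (v : 'I_n -> 'I_n -> C)
   (F1 F2 : 'I_n -> 'I_n -> 'I_n -> 'I_n -> 'I_n -> C) :
  \sum_(a < n) \sum_(b < n) \sum_(c < n) w a b c * \sum_(e < n) \sum_(f < n) v e f * (F1 a b c e f + F2 a b c e f) =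
  \sum_(a < n) \sum_(b < n) \sum_(c < n) w a b c * \sum_(e < n) \sum_(f < n) v e f * F1 a b c e f +
  \sum_(a < n) \sum_(b < n) \sum_(c < n) w a b c * \sum_(e < n) \sum_(f < n) v e f * F2 a b c e f.
Proof.
rewrite -!big_split /=; apply eq_bigr => a _; rewrite -!big_split /=; apply eq_bigr => b _.
rewrite -!big_split /=; apply eq_bigr => c _.
rewrite -!mulrDr; congr (_ * _); rewrite -!big_split /=; apply eq_bigr => e _.
by rewrite -!big_split /=; apply eq_bigr => f _; rewrite !mulrDr.
Qed.

Lemma I2A (C : numClosedFieldType) n (z : 'M[C]_n) (d : C) :
  (forall e f, \sum_(a < n) \sum_(b < n) (z a b)^* * z a f * z e b = d * z e f) ->
  forall (g : state C n) m, NA z (Xop z g) m = Xop z (NA z g) m + d * Xop z g m.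
Proof.
move=> K g m.
have E : forall b dd, Adag dd (Aop b (Xop z g)) m =
   \sum_(e < n) \sum_(f < n) z e f * (Bdag e (Adag f (Adag dd (Aop b g))) m
      + (f == b)%:R * Bdag e (Adag dd g) m).
  move=> b dd; rewrite /Xop (shiftS2c (AdagS dd) (AopS b)).
  by apply eq_bigr => e _; apply eq_bigr => f _; rewrite L4B.
rewrite /NA.
under eq_bigr do under eq_bigr do under eq_bigr do rewrite E.
rewrite split32.
rewrite /Xop.
under [in RHS]eq_bigr do under eq_bigr do rewrite (shiftS3c (BdagS _) (AdagS _)).
rewrite -swap32; congr (_ + _).
transitivity (\sum_(a < n) \sum_(b < n) \sum_(dd < n) \sum_(e < n)
    ((z a b)^* * z a dd * z e b) * Bdag e (Adag dd g) m).
  apply eq_bigr => a _; apply eq_bigr => b _; apply eq_bigr => dd _.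
  rewrite mulr_sumr; apply eq_bigr => e _; by rewrite sum_delta_r mulrA.
rewrite exch22 exchange_big mulr_sumr; apply eq_bigr => e _.
rewrite mulr_sumr; apply eq_bigr => dd _; rewrite mulrA -K mulr_suml; apply eq_bigr => a _.
by rewrite mulr_suml.
Qed.

Lemma I2B (C : numClosedFieldType) n (z : 'M[C]_n) (d : C) :
  (forall e f, \sum_(a < n) \sum_(b < n) (z a b)^* * z a f * z e b = d * z e f) ->
  forall (g : state C n) m, NB z (Xop z g) m = Xop z (NB z g) m + d * Xop z g m.
Proof.
move=> K g m.
have E : forall a c, Bdag c (Bop a (Xop z g)) m =
   \sum_(e < n) \sum_(f < n) z e f * (Bdag e (Adag f (Bdag c (Bop a g))) m
      + (e == a)%:R * Bdag c (Adag f g) m).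
  move=> a c; rewrite /Xop (shiftS2c (BdagS c) (BopS a)).
  by apply eq_bigr => e _; apply eq_bigr => f _; rewrite L4C.
rewrite /NB.
under eq_bigr do under eq_bigr do under eq_bigr do rewrite E.
rewrite split32.
rewrite /Xop.
under [in RHS]eq_bigr do under eq_bigr do rewrite (shiftS3c (BdagS _) (AdagS _)).
rewrite -swap32; congr (_ + _).
transitivity (\sum_(a < n) \sum_(b < n) \sum_(c < n) \sum_(f < n)
    ((z a b)^* * z a f * z c b) * Bdag c (Adag f g) m).
  apply eq_bigr => a _; apply eq_bigr => b _; apply eq_bigr => c _.
  rewrite exchange_big mulr_sumr; apply eq_bigr => f _.
  rewrite (sum_delta_r (fun e => z e f)); ring.
rewrite exch22 mulr_sumr; apply eq_bigr => c _.
rewrite mulr_sumr; apply eq_bigr => f _; rewrite mulrA -K mulr_suml; apply eq_bigr => a _.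
by rewrite mulr_suml.
Qed.

Definition vk (C : numClosedFieldType) n (z : 'M[C]_n) k : state C n := iter k (Xop z) (@vac C n).

Lemma Aop_vac (C : numClosedFieldType) n (b : 'I_n) : Aop b (@vac C n) = fun _ => 0.
Proof.
apply: functional_extensionality => m; rewrite /Aop /vac.
case: eqP => [[/ffunP /(_ b)]|]; last by rewrite mulr0.
by rewrite !ffunE eqxx addn1.
Qed.
Lemma Bop_vac (C : numClosedFieldType) n (b : 'I_n) : Bop b (@vac C n) = fun _ => 0.
Proof.
apply: functional_extensionality => m; rewrite /Bop /vac.
case: eqP => [[_ /ffunP /(_ b)]|]; last by rewrite mulr0.
by rewrite !ffunE eqxx addn1.
Qed.

Lemma NA_vac (C : numClosedFieldType) n (z : 'M[C]_n) m : NA z (@vac C n) m = 0.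
Proof.
rewrite /NA; rewrite big1 // => a _; rewrite big1 // => b _; rewrite big1 // => d _.
by rewrite Aop_vac (shift0 (AdagS d)) mulr0.
Qed.
Lemma NB_vac (C : numClosedFieldType) n (z : 'M[C]_n) m : NB z (@vac C n) m = 0.
Proof.
rewrite /NB; rewrite big1 // => a _; rewrite big1 // => b _; rewrite big1 // => d _.
by rewrite Bop_vac (shift0 (BdagS d)) mulr0.
Qed.
Lemma Xd_vac (C : numClosedFieldType) n (z : 'M[C]_n) : Xd z (@vac C n) = fun _ => 0.
Proof.
apply: functional_extensionality => m.
rewrite /Xd; rewrite big1 // => a _; rewrite big1 // => b _.
by rewrite Bop_vac (shift0 (AopS b)) mulr0.
Qed.

Lemma XopZ (C : numClosedFieldType) n (z : 'M[C]_n) c (f : state C n) m :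
  Xop z (fun m => c * f m) m = c * Xop z f m.
Proof.
rewrite /Xop mulr_sumr; apply eq_bigr => a _; rewrite mulr_sumr; apply eq_bigr => b _.
by rewrite (shiftZ (shift_comp (BdagS a) (AdagS b))) mulrCA.
Qed.
Lemma XopD (C : numClosedFieldType) n (z : 'M[C]_n) (f g : state C n) m :
  Xop z (fun m => f m + g m) m = Xop z f m + Xop z g m.
Proof.
rewrite /Xop -big_split; apply eq_bigr => a _; rewrite -big_split; apply eq_bigr => b _.
by rewrite (shiftD (shift_comp (BdagS a) (AdagS b))) mulrDr.
Qed.
Lemma Xop0 (C : numClosedFieldType) n (z : 'M[C]_n) m : Xop z (fun _ => 0) m = 0.
Proof.
rewrite /Xop; rewrite big1 // => a _; rewrite big1 // => b _.
by rewrite (shift0 (shift_comp (BdagS a) (AdagS b))) mulr0.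
Qed.

Lemma Nvk (C : numClosedFieldType) n (z : 'M[C]_n) (d : C) :
  (forall e f, \sum_(a < n) \sum_(b < n) (z a b)^* * z a f * z e b = d * z e f) ->
  forall k m, NA z (vk z k) m + NB z (vk z k) m = (2%:R * d * k%:R) * vk z k m.
Proof.
move=> K; elim=> [|k IH] m.
  by rewrite /vk /= NA_vac NB_vac addr0 mulr0 mul0r.
rewrite /vk iterS -/(vk z k) (I2A K) (I2B K).
have -> : Xop z (NA z (vk z k)) m + d * Xop z (vk z k) m + (Xop z (NB z (vk z k)) m + d * Xop z (vk z k) m)
   = Xop z (fun m => NA z (vk z k) m + NB z (vk z k) m) m + 2%:R * d * Xop z (vk z k) m.
  by rewrite XopD; ring.
have -> : (fun m => NA z (vk z k) m + NB z (vk z k) m) = (fun m => (2%:R * d * k%:R) * vk z k m).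
  by apply: functional_extensionality => m'; rewrite IH.
by rewrite XopZ -natr1; ring.
Qed.

Lemma Xdvk (C : numClosedFieldType) n (z : 'M[C]_n) (d : C) :
  (forall e f, \sum_(a < n) \sum_(b < n) (z a b)^* * z a f * z e b = d * z e f) ->
  \sum_(a < n) \sum_(b < n) (z a b)^* * z a b = 2%:R * d ->
  forall k m, Xd z (vk z k.+1) m = (d * (k.+1 * k.+2)%:R) * vk z k m.
Proof.
move=> K ht; elim=> [|k IH] m.
  rewrite /vk /= I1 Xd_vac Xop0 NA_vac NB_vac ht; ring.
rewrite {1}/vk iterS -/(vk z k.+1) I1 -addrA (Nvk K).
have -> : Xd z (vk z k.+1) = (fun m => (d * (k.+1 * k.+2)%:R) * vk z k m).
  by apply: functional_extensionality => m'; rewrite IH.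
rewrite XopZ /vk iterS -/(vk z k) ht !natrM -!natr1; ring.
Qed.

Definition box n N := ({ffun 'I_n -> 'I_N} * {ffun 'I_n -> 'I_N})%type.
Definition emb n N (p : box n N) : occ n := ([ffun i => val (p.1 i)], [ffun i => val (p.2 i)]).
Definition ip (C : numClosedFieldType) n N (f g : state C n) : C :=
  \sum_(p : box n N) (f (emb p))^* * g (emb p).
Definition inboxb n N (m : occ n) := [forall i, (m.1 i < N)%N] && [forall i, (m.2 i < N)%N].

Lemma emb_in n N (p : box n N) : inboxb N (emb p).
Proof. by apply/andP; split; apply/forallP => i; rewrite ffunE ltn_ord. Qed.

Lemma emb_inj n N : injective (@emb n N).
Proof.
move=> [p1 p2] [q1 q2] [/ffunP E1 /ffunP E2] /=.
congr (_, _); apply/ffunP => i; apply: val_inj.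
  by have := E1 i; rewrite !ffunE.
by have := E2 i; rewrite !ffunE.
Qed.

Lemma sum_emb (C : numClosedFieldType) n N (m : occ n) (H : occ n -> C) :
  \sum_(q : box n N) (emb q == m)%:R * H (emb q) = if inboxb N m then H m else 0.
Proof.
case: ifP => Hin.
  case/andP: Hin => /forallP H1 /forallP H2.
  pose q0 : box n N := ([ffun i => Ordinal (H1 i)], [ffun i => Ordinal (H2 i)]).
  have Eq0 : emb q0 = m.
    case: m H1 H2 @q0 => m1 m2 H1 H2 q0.
    by rewrite /emb /=; congr (_, _); apply/ffunP => i; rewrite !ffunE.
  rewrite (bigD1 q0) //= Eq0 eqxx mul1r big1 ?addr0 // => q nq.
  have -> : (emb q == m) = false.
    apply/negbTE; apply: contra nq => /eqP E; apply/eqP; apply: emb_inj; by rewrite E Eq0.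
  by rewrite mul0r.
rewrite big1 // => q _; have -> : (emb q == m) = false.
  by apply/negbTE; apply: contraFN Hin => /eqP <-; exact: emb_in.
by rewrite mul0r.
Qed.

Lemma conj_sqrt_nat (C : numClosedFieldType) k : (sqrtC (k%:R : C))^* = sqrtC k%:R.
Proof. by apply: geC0_conj; rewrite sqrtC_ge0 ler0n. Qed.

Lemma bumpA_eq n (m m' : occ n) a :
  (m' == (Defs.bump m.1 a, m.2)) = (0 < m'.1 a)%N && (m == (Defs.unbump m'.1 a, m'.2)).
Proof.
case: m m' => m1 m2 [m1' m2'] /=.
apply/eqP/andP => [[-> ->]|[pos /eqP [-> ->]]]; last by rewrite bumpK.
by rewrite unbumpK bumpE eqxx addn1.
Qed.
Lemma bumpB_eq n (m m' : occ n) a :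
  (m' == (m.1, Defs.bump m.2 a)) = (0 < m'.2 a)%N && (m == (m'.1, Defs.unbump m'.2 a)).
Proof.
case: m m' => m1 m2 [m1' m2'] /=.
apply/eqP/andP => [[-> ->]|[pos /eqP [-> ->]]]; last by rewrite bumpK.
by rewrite unbumpK bumpE eqxx addn1.
Qed.

Lemma inbox_unbumpA n N (m : occ n) a : inboxb N m -> inboxb N (Defs.unbump m.1 a, m.2).
Proof.
case/andP => /forallP H1 H2; apply/andP; split => //; apply/forallP => i /=.
by rewrite ffunE; apply: leq_ltn_trans (H1 i); apply: leq_subr.
Qed.
Lemma inbox_unbumpB n N (m : occ n) a : inboxb N m -> inboxb N (m.1, Defs.unbump m.2 a).
Proof.
case/andP => H1 /forallP H2; apply/andP; split => //; apply/forallP => i /=.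
by rewrite ffunE; apply: leq_ltn_trans (H2 i); apply: leq_subr.
Qed.

Lemma adjA (C : numClosedFieldType) n N a (h g : state C n) :
  (forall m, ~~ inboxb N m -> g m = 0) ->
  ip N (Adag a h) g = ip N h (Aop a g).
Proof.
move=> hg.
pose S := \sum_(p : box n N) \sum_(q : box n N) (emb q == (Defs.bump (emb p).1 a, (emb p).2))%:R *
   (sqrtC ((emb p).1 a).+1%:R * ((h (emb p))^* * g (emb q))).
transitivity S; last first.
  apply eq_bigr => p _.
  rewrite (sum_emb N _ (fun m' => sqrtC ((emb p).1 a).+1%:R * ((h (emb p))^* * g m'))).
  case: ifP => Hin; first by rewrite /Aop mulrCA.
  by rewrite /Aop hg ?Hin // !mulr0.
rewrite /S exchange_big; apply eq_bigr => q _.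
under eq_bigr do rewrite bumpA_eq -mulnb natrM -mulrA.
rewrite /Adag; case: ifP => pos; last first.
  by rewrite rmorph0 mul0r big1 // => p _; rewrite mulr0n mul0r.
under eq_bigr do rewrite mulr1n mul1r.
rewrite (sum_emb N _ (fun m' => sqrtC (m'.1 a).+1%:R * ((h m')^* * g (emb q)))).
rewrite inbox_unbumpA ?emb_in //= unbumpE eqxx subn1 prednK //.
by rewrite rmorphM /= conj_sqrt_nat mulrA.
Qed.

Lemma adjB (C : numClosedFieldType) n N a (h g : state C n) :
  (forall m, ~~ inboxb N m -> g m = 0) ->
  ip N (Bdag a h) g = ip N h (Bop a g).
Proof.
move=> hg.
pose S := \sum_(p : box n N) \sum_(q : box n N) (emb q == ((emb p).1, Defs.bump (emb p).2 a))%:R *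
   (sqrtC ((emb p).2 a).+1%:R * ((h (emb p))^* * g (emb q))).
transitivity S; last first.
  apply eq_bigr => p _.
  rewrite (sum_emb N _ (fun m' => sqrtC ((emb p).2 a).+1%:R * ((h (emb p))^* * g m'))).
  case: ifP => Hin; first by rewrite /Bop mulrCA.
  by rewrite /Bop hg ?Hin // !mulr0.
rewrite /S exchange_big; apply eq_bigr => q _.
under eq_bigr do rewrite bumpB_eq -mulnb natrM -mulrA.
rewrite /Bdag; case: ifP => pos; last first.
  by rewrite rmorph0 mul0r big1 // => p _; rewrite mulr0n mul0r.
under eq_bigr do rewrite mulr1n mul1r.
rewrite (sum_emb N _ (fun m' => sqrtC (m'.2 a).+1%:R * ((h m')^* * g (emb q)))).
rewrite inbox_unbumpB ?emb_in //= unbumpE eqxx subn1 prednK //.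
by rewrite rmorphM /= conj_sqrt_nat mulrA.
Qed.

Lemma inbox_bumpB n N (m : occ n) a : ~~ inboxb N m -> ~~ inboxb N (m.1, Defs.bump m.2 a).
Proof.
apply: contra => /andP [H1 /forallP H2]; apply/andP; split => //; apply/forallP => i.
by apply: leq_ltn_trans (H2 i); rewrite ffunE leq_addr.
Qed.

Lemma adjX (C : numClosedFieldType) n N (z : 'M[C]_n) (h g : state C n) :
  (forall m, ~~ inboxb N m -> g m = 0) ->
  ip N (Xop z h) g = ip N h (Xd z g).
Proof.
move=> hg.
have hBg : forall a m, ~~ inboxb N m -> Bop a g m = 0.
  by move=> a m Hm; rewrite /Bop hg ?mulr0 // inbox_bumpB.
transitivity (\sum_(a < n) \sum_(b < n) (z a b)^* * ip N (Bdag a (Adag b h)) g).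
  transitivity (\sum_(p : box n N) \sum_(a < n) \sum_(b < n)
      (z a b)^* * ((Bdag a (Adag b h) (emb p))^* * g (emb p))).
    apply eq_bigr => p _; rewrite /Xop rmorph_sum mulr_suml; apply eq_bigr => a _.
    by rewrite rmorph_sum mulr_suml; apply eq_bigr => b _; rewrite rmorphM mulrA.
  rewrite exchange_big; apply eq_bigr => a _; rewrite exchange_big; apply eq_bigr => b _.
  by rewrite /ip mulr_sumr.
rewrite (eq_bigr (fun a => \sum_(b < n) (z a b)^* * ip N h (Aop b (Bop a g)))); last first.
  by move=> a _; apply eq_bigr => b _; rewrite adjB // adjA //; exact: hBg.
rewrite /ip /Xd.
transitivity (\sum_(p : box n N) \sum_(a < n) \sum_(b < n)
      (z a b)^* * ((h (emb p))^* * Aop b (Bop a g) (emb p))).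
  rewrite [RHS]exchange_big; apply eq_bigr => a _; rewrite [RHS]exchange_big; apply eq_bigr => b _.
  by rewrite mulr_sumr.
apply eq_bigr => p _; rewrite mulr_sumr; apply eq_bigr => a _; rewrite mulr_sumr.
by apply eq_bigr => b _; rewrite mulrCA.
Qed.

Definition tot n (f : {ffun 'I_n -> nat}) := (\sum_(i < n) f i)%N.

Lemma tot_bump n (f : {ffun 'I_n -> nat}) a : tot (Defs.bump f a) = (tot f).+1.
Proof.
rewrite /tot (eq_bigr (fun i => f i + (i == a))%N); last by move=> i _; rewrite ffunE.
rewrite big_split /= -addn1; congr (_ + _)%N.
rewrite (bigD1 a) //= eqxx big1 // => i /negbTE ->.
by [].
Qed.
Lemma tot_unbump n (f : {ffun 'I_n -> nat}) a : (0 < f a)%N -> tot f = (tot (Defs.unbump f a)).+1.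
Proof. by move=> H; rewrite -(tot_bump _ a) bumpK. Qed.
Lemma entry_le_tot n (f : {ffun 'I_n -> nat}) i : (f i <= tot f)%N.
Proof. by rewrite /tot (bigD1 i) //= leq_addr. Qed.

Lemma supp_vk (C : numClosedFieldType) n (z : 'M[C]_n) k (m : occ n) :
  ~~ ((tot m.1 == k) && (tot m.2 == k)) -> vk z k m = 0.
Proof.
elim: k m => [|k IH] m Hm.
  rewrite /vk /= /vac; case: eqP => [E|_] //.
  have T0 : tot [ffun _ : 'I_n => 0%N] = 0%N by rewrite /tot big1 // => i _; rewrite ffunE.
  by move: Hm; rewrite E /= T0 eqxx.
rewrite /vk iterS -/(vk z k) /Xop big1 // => a _; rewrite big1 // => b _.
rewrite /Bdag /Adag /=; case: ifP => pa; last by rewrite !mulr0.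
case: ifP => pb; last by rewrite !mulr0.
rewrite IH ?mulr0 //=; apply: contra Hm => /andP [/eqP t1 /eqP t2].
by rewrite (tot_unbump pb) (tot_unbump pa) t1 t2 !eqxx.
Qed.

Lemma vk_box (C : numClosedFieldType) n (z : 'M[C]_n) k N (m : occ n) :
  (k < N)%N -> ~~ inboxb N m -> vk z k m = 0.
Proof.
move=> kN Hm; apply: supp_vk; apply: contra Hm => /andP [/eqP t1 /eqP t2].
apply/andP; split; apply/forallP => i; apply: leq_ltn_trans (entry_le_tot _ i) _.
  by rewrite t1.
by rewrite t2.
Qed.

Lemma ip_scale (C : numClosedFieldType) n N (f g : state C n) c :
  ip N f (fun m => c * g m) = c * ip N f g.
Proof. by rewrite /ip mulr_sumr; apply eq_bigr => p _; rewrite mulrCA. Qed.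

Lemma norm_vac (C : numClosedFieldType) n N : (0 < N)%N -> ip N (@vac C n) (@vac C n) = 1.
Proof.
move=> N0; rewrite /ip.
set m0 : occ n := ([ffun _ => 0%N], [ffun _ => 0%N]).
rewrite (eq_bigr (fun p => (emb p == m0)%:R * 1)).
  have := sum_emb N m0 (fun _ => 1 : C); rewrite /= => ->.
  case: ifP => // /negP []; apply/andP; split; apply/forallP => i; by rewrite ffunE.
move=> p _; rewrite /vac; case: eqP => _ /=; by rewrite ?rmorph1 ?mul1r ?mulr1 ?mul0r ?mulr0.
Qed.

Lemma norm_vk (C : numClosedFieldType) n (z : 'M[C]_n) (d : C) :
  (forall e f, \sum_(a < n) \sum_(b < n) (z a b)^* * z a f * z e b = d * z e f) ->
  \sum_(a < n) \sum_(b < n) (z a b)^* * z a b = 2%:R * d ->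
  forall J N, (J < N)%N -> ip N (vk z J) (vk z J) = d ^+ J * (J`! * J.+1`!)%:R.
Proof.
move=> K ht; elim=> [|J IH] N JN.
  by rewrite norm_vac // expr0 mul1r.
rewrite {1}/vk iterS -/(vk z J) (@adjX _ _ N z (vk z J) (vk z J.+1) (fun m => @vk_box _ _ z _ _ m JN)).
have -> : Xd z (vk z J.+1) = (fun m => (d * (J.+1 * J.+2)%:R) * vk z J m).
  by apply: functional_extensionality => m; rewrite (Xdvk K ht).
rewrite ip_scale IH; last by apply: ltnW.
rewrite (factS J.+1) (factS J) !natrM exprS; ring.
Qed.

Lemma NumA (C : numClosedFieldType) n a (f : state C n) m :
  Adag a (Aop a f) m = (m.1 a)%:R * f m.
Proof.
case: m => m1 m2; rewrite /Adag /Aop /=; case: ifP => pos; last first.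
  by move/negbT: pos; rewrite -eqn0Ngt => /eqP ->; rewrite mul0r.
by rewrite unbumpE eqxx subn1 prednK // bumpK // mulrA sqrt_mul.
Qed.
Lemma NumB (C : numClosedFieldType) n a (f : state C n) m :
  Bdag a (Bop a f) m = (m.2 a)%:R * f m.
Proof.
case: m => m1 m2; rewrite /Bdag /Bop /=; case: ifP => pos; last first.
  by move/negbT: pos; rewrite -eqn0Ngt => /eqP ->; rewrite mul0r.
by rewrite unbumpE eqxx subn1 prednK // bumpK // mulrA sqrt_mul.
Qed.

Lemma areaE (C : numClosedFieldType) n (f : state C n) m :
  areaOp f m = 2%:R^-1 * (tot m.1 + tot m.2)%:R * f m.
Proof.
rewrite /areaOp (eq_bigr (fun a => 2%:R^-1 * f m * (m.1 a + m.2 a)%:R)); last first.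
  by move=> a _; rewrite /Eop NumA NumB eqxx natrD mulr1n; ring.
by rewrite -mulr_sumr -natr_sum big_split /= /tot; ring.
Qed.

Lemma PiJE (C : numClosedFieldType) n J (f : state C n) m :
  PiJ J f m = if (tot m.1 + tot m.2 == 2 * J)%N then f m else 0.
Proof.
have two0 : (2%:R : C) != 0 by rewrite pnatr_eq0.
rewrite /PiJ; case: excluded_middle_informative => [H|H] /=; case: eqP => E //.
  exfalso; apply: E; apply/eqP; rewrite -(eqr_nat C).
  have := congr1 (fun F => F m) H; rewrite /= areaE /ket_basis eqxx mulr1n !mulr1 => H'.
  by rewrite natrM -H' mulrA mulfV // mul1r.
exfalso; apply: H; apply: functional_extensionality => m'.
rewrite areaE /ket_basis; case: eqP => [->|_]; last by rewrite !mulr0.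
have h2 : (2%:R^-1 * ((2 * J)%N)%:R : C) = J%:R by rewrite natrM mulrA mulVf // mul1r.
by rewrite E; congr (_ * _); exact: h2.
Qed.

Lemma FX (C : numClosedFieldType) n (z : 'M[C]_n) (g : state C n) m :
  z^T = - z -> 2%:R^-1 * Ftilz z g m = Xop z g m.
Proof.
move=> zT.
have zA : forall k l, z l k = - z k l.
  by move=> k l; move/matrixP: zT => /(_ k l); rewrite !mxE.
have E2 : \sum_(a < n) \sum_(b < n) z a b * Adag a (Bdag b g) m = - Xop z g m.
  rewrite exchange_big /Xop -sumrN; apply eq_bigr => b _; rewrite -sumrN; apply eq_bigr => a _.
  by rewrite c5 zA mulNr.
rewrite /Ftilz /Ftil.
under eq_bigr do under eq_bigr do rewrite mulrBr.
under eq_bigr do rewrite sumrB.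
rewrite sumrB E2 -/(Xop z g m) opprK -[X in _ * X]mulr2n -[X in _ * X]mulr_natl mulrA mulVf ?mul1r //.
by rewrite pnatr_eq0.
Qed.

Lemma iterF (C : numClosedFieldType) n (z : 'M[C]_n) k :
  z^T = - z ->
  iter k (fun g => fun m' => 2%:R^-1 * Ftilz z g m') (@vac C n) = vk z k.
Proof.
move=> zT; elim: k => [//|k IH].
rewrite iterS IH /vk iterS -/(vk z k); apply: functional_extensionality => m.
exact: FX.
Qed.

Lemma exp_partialE (C : numClosedFieldType) n (z : 'M[C]_n) J K (m : occ n) :
  z^T = - z -> (tot m.1 + tot m.2 = 2 * J)%N -> (J < K)%N ->
  exp_partial z K m = sqrtC (\det (1%:M - adjmx z *m z)) * ((J`!)%:R^-1 * vk z J m).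
Proof.
move=> zT Hm JK; rewrite /exp_partial; congr (_ * _).
under eq_bigr do rewrite iterF //.
rewrite (bigD1 (Ordinal JK)) //= big1 ?addr0 // => k nk.
rewrite supp_vk ?mulr0 //; apply: contra nk => /andP [/eqP t1 /eqP t2].
apply/eqP; apply: val_inj => /=; move: Hm; rewrite t1 t2 addnn -mul2n.
by move/eqP; rewrite eqn_mul2l /= => /eqP.
Qed.

Theorem mainTheorem18 (C : numClosedFieldType) (n : nat) (zeta : 'M[C]_n)
    (psi : state C n) (J : nat) :
  in_Omega zeta -> \rank zeta = 2%N -> is_ket_zeta zeta psi ->
  exists N, forall N', (N <= N')%N ->
    norm2_box (PiJ J psi) N' =
      \det (1%:M - adjmx zeta *m zeta) *
      (2%:R^-1 * \tr (adjmx zeta *m zeta)) ^+ J * (J.+1)%:R.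
Proof.
move=> hO rk hk.
case: hO => zT _.
have [x [y zE]] := rank2_decomp zT rk.
set dg := (\sum_a (x a)^* * x a) * (\sum_a (y a)^* * y a)
          - (\sum_a (x a)^* * y a) * (\sum_a (y a)^* * x a).
have ht : \sum_(a < n) \sum_(b < n) (zeta a b)^* * zeta a b = 2%:R * dg := tr_decomp zE.
have K : forall e f, \sum_(a < n) \sum_(b < n) (zeta a b)^* * zeta a f * zeta e b = dg * zeta e f
  := K_decomp zE.
have hdet : \det (1%:M - adjmx zeta *m zeta) = (1 - dg) ^+ 2 := det_decomp zE.
have two0 : (2%:R : C) != 0 by rewrite pnatr_eq0.
have htr : 2%:R^-1 * \tr (adjmx zeta *m zeta) = dg by rewrite tr_adj ht mulrA mulVf ?mul1r.
have dg0 : 0 <= dg.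
  have : 0 <= \sum_(a < n) \sum_(b < n) (zeta a b)^* * zeta a b.
    by apply: sumr_ge0 => a _; apply: sumr_ge0 => b _; rewrite -normCKC exprn_ge0.
  by rewrite ht pmulr_rge0 // ltr0n.
have det0 : 0 <= \det (1%:M - adjmx zeta *m zeta).
  by rewrite hdet -realEsqr rpredB ?rpred1 // ger0_real.
set s := sqrtC (\det (1%:M - adjmx zeta *m zeta)).
have Hpi : forall m, PiJ J psi m = s * ((J`!)%:R^-1 * vk zeta J m).
  move=> m; rewrite PiJE; case: eqP => Hm.
    have [K0 HK] := hk m.
    by rewrite (HK (maxn K0 J.+1)) ?leq_maxl // (exp_partialE zT Hm) // leq_maxr.
  rewrite supp_vk ?mulr0 //; apply/negP => /andP [/eqP t1 /eqP t2]; apply: Hm.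
  by rewrite t1 t2 addnn mul2n.
exists J.+1 => N' hN.
have -> : norm2_box (PiJ J psi) N' = \sum_(p : box n N') `|PiJ J psi (emb p)| ^+ 2 by [].
rewrite (eq_bigr (fun p => `|s * (J`!)%:R^-1| ^+ 2 * ((vk zeta J (emb p))^* * vk zeta J (emb p)))); last first.
  by move=> p _; rewrite Hpi mulrA normrM exprMn (normCKC (vk zeta J (emb p))).
rewrite -mulr_sumr.
have -> : \sum_(i : box n N') (vk zeta J (emb i))^* * vk zeta J (emb i) = ip N' (vk zeta J) (vk zeta J) by [].
rewrite (norm_vk K ht) //.
rewrite normrM exprMn -normrX sqrtCK (ger0_norm det0) normfV normr_nat htr.
have f0 : (J`!%:R : C) != 0 by rewrite pnatr_eq0 -lt0n fact_gt0.
rewrite (factS J) natrM; field.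
by [].
Qed.
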